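(* Assume $J$ satisfies (J1), (J2), (J5) and (JP), and $h\equiv0$. Let $u$ be a minimizer for $H$ in $Q_\ell(q)$ for some $q\in\mathbb Z^d$, $\ell\in\mathbb N$. If $q\in\partial u$, then $$I_{Q_\ell(q),Q_\ell(q)}(u)\ge c_\star\,\ell^{d-s},$$ for a constant $c_\star>0$ depending only on $d$, $s$, $\lambda$ and $\Lambda$.
   Context: Fix $d\ge2$, $|x|:=\sum_n|x_n|$, $|x|_\infty:=\max_n|x_n|$. Configurations are maps $u:\mathbb Z^d\to\{-1,1\}$; $\partial u:=\{i: u_i=1\text{ and }\exists j,\ |i-j|=1,\ u_j=-1\}$. $I_{\Gamma,\Omega}(u):=\sum_{i\in\Gamma,j\in\Omega}J_{ij}(1-u_iu_j)$. With $h\equiv0$, for finite $\Gamma$: $H_\Gamma(u):=\sum_{(i,j)\in\mathbb Z^{2d}\setminus(\mathbb Z^d\setminus\Gamma)^2}J_{ij}(1-u_iu_j)$; $u$ is a minimizer for $H$ in $\Gamma$ if $H_\Gamma(u)\le H_\Gamma(v)$ for all $v$ agreeing with $u$ outside $\Gamma$. $Q_\ell(q):=\{i\in\mathbb Z^d:|i-q|_\infty\le\ell\}$. Conditions on $J:\mathbb Z^d\times\mathbb Z^d\to[0,\infty)$: (J1) $J_{ij}=J_{ji}$; (J2) $J_{ii}=0$; (J5) $J_{ij}=J_{i'j'}$ whenever $i-i'=j-j'\in\tau\mathbb Z^d$, for some $\tau\in\mathbb N$; (JP) $\lambda|i-j|^{-d-s}\le J_{ij}\le\Lambda|i-j|^{-d-s}$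 for all $i\ne j$, for some $s\in(0,1)$, $\Lambda\ge\lambda>0$. *)

(* Defs.v *)
From mathcomp Require Import all_boot.
From Stdlib Require Import Reals ZArith List.

Set Implicit Arguments.
Unset Strict Implicit.

Definition pt (d : nat) := 'I_d -> Z.

(* A configuration u : Z^d -> {-1,1}; true encodes +1, false encodes -1. *)
Definition config (d : nat) := pt d -> bool.
Definition sv (b : bool) : R := if b then 1%R else (-1)%R.

Definition psub {d} (x y : pt d) : pt d := fun k => (x k - y k)%Z.

Definition l1 {d} (x : pt d) : Z :=
  foldr (fun k acc => (Z.abs (x k) + acc)%Z) 0%Z (enum 'I_d).
Definition linf {d} (x : pt d) : Z :=
  foldr (fun k acc => Z.max (Z.abs (x k)) acc) 0%Z (enum 'I_d).

Definition in_boundary {d} (u : config d) (q : pt d) : Prop :=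
  u q = true /\ exists j : pt d, l1 (psub q j) = 1%Z /\ u j = false.

Definition cube {d} (q : pt d) (l : nat) (i : pt d) : Prop :=
  (linf (psub i q) <= Z.of_nat l)%Z.

Definition cube_enum {d} (q : pt d) (l : nat) : list (pt d) :=
  map (fun f : {ffun 'I_d -> 'I_(l.*2.+1)} =>
         fun k => (q k + Z.of_nat (nat_of_ord (f k)) - Z.of_nat l)%Z)
      (enum {ffun 'I_d -> 'I_(l.*2.+1)}).

Definition pair_energy {d} (J : pt d -> pt d -> R) (u : config d)
  (p : pt d * pt d) : R :=
  (J (fst p) (snd p) * (1 - sv (u (fst p)) * sv (u (snd p))))%R.

Definition list_sumR (l : list R) : R := fold_right Rplus 0%R l.

(* I_{A,B}(u) for finite sets A, B given by duplicate-free enumerations. *)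
Definition Isum {d} (J : pt d -> pt d -> R) (u : config d)
  (A B : list (pt d)) : R :=
  list_sumR (map (fun i => list_sumR
     (map (fun j => pair_energy J u (i, j)) B)) A).

Definition adm {d} (Gamma : pt d -> Prop) (p : pt d * pt d) : Prop :=
  Gamma (fst p) \/ Gamma (snd p).

Definition partial_H {d} J (u : config d) (L : list (pt d * pt d)) : R :=
  list_sumR (map (pair_energy J u) L).

(* H_Gamma(u) <= H_Gamma(v), where H_Gamma is the (possibly infinite) sum of
   the nonnegative terms J_ij (1 - u_i u_j) over admissible pairs, i.e. the
   supremum of finite partial sums, compared in [0, +oo]. *)
Definition H_le {d} (J : pt d -> pt d -> R) (Gamma : pt d -> Prop)
  (u v : config d) : Prop :=
  forall L : list (pt d * pt d), NoDup L -> (forall p, In p L -> adm Gamma p) ->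
  forall eps : R, (0 < eps)%R ->
  exists L' : list (pt d * pt d), NoDup L' /\ (forall p, In p L' -> adm Gamma p) /\
    (partial_H J u L <= partial_H J v L' + eps)%R.

Definition minimizer {d} (J : pt d -> pt d -> R) (Gamma : pt d -> Prop)
  (u : config d) : Prop :=
  forall v : config d, (forall i, ~ Gamma i -> v i = u i) -> H_le J Gamma u v.

Definition J1 {d} (J : pt d -> pt d -> R) : Prop := forall i j, J i j = J j i.
Definition J2 {d} (J : pt d -> pt d -> R) : Prop := forall i, J i i = 0%R.
Definition J5 {d} (J : pt d -> pt d -> R) : Prop :=
  exists tau : nat, (1 <= tau)%coq_nat /\
    forall i j i' j' : pt d,
      (forall k, (i k - i' k = j k - j' k)%Z) ->
      (forall k, exists m : Z, (i k - i' k = Z.of_nat tau * m)%Z) ->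
      J i j = J i' j'.
Definition JP {d} (J : pt d -> pt d -> R) (s lam Lam : R) : Prop :=
  forall i j : pt d, (0 < l1 (psub i j))%Z ->
    (lam * Rpower (IZR (l1 (psub i j))) (- (INR d + s)) <= J i j /\
     J i j <= Lam * Rpower (IZR (l1 (psub i j))) (- (INR d + s)))%R.

(* Main.v *)
Require Import Defs.
From mathcomp Require Import all_boot.
From Stdlib Require Import Reals ZArith List Lia Lra Psatz.
From Stdlib Require Import Classical ClassicalEpsilon FunctionalExtensionality.
From mathcomp Require Import zify.

Set Implicit Arguments.
Set Strict Implicit.

Section Norms.
Variable d : nat.

Lemma foldr_max_ge (x : pt d) (s : seq.seq 'I_d) k :
  k \in s -> (Z.abs (x k) <= foldr (fun k acc => Z.max (Z.abs (x k)) acc) 0 s)%Z.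
Proof.
elim: s => [|a s IH] //=. rewrite seq.in_cons => /orP [/eqP ->|H]. lia.
specialize (IH H). lia.
Qed.

Lemma foldr_max_le (x : pt d) (s : seq.seq 'I_d) m :
  (0 <= m)%Z -> (forall k, Z.abs (x k) <= m)%Z ->
  (foldr (fun k acc => Z.max (Z.abs (x k)) acc) 0 s <= m)%Z.
Proof.
move=> H0 H. elim: s => [|a s IH] //=. specialize (H a). lia.
Qed.

Lemma foldr_max_nonneg (x : pt d) (s : seq.seq 'I_d) :
  (0 <= foldr (fun k acc => Z.max (Z.abs (x k)) acc) 0 s)%Z.
Proof. elim: s => [|a s IH] //=; lia. Qed.

Lemma foldr_sum_ge (x : pt d) (s : seq.seq 'I_d) k :
  k \in s -> (Z.abs (x k) <= foldr (fun k acc => Z.abs (x k) + acc) 0 s)%Z.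
Proof.
have Hn : forall s, (0 <= foldr (fun k acc => Z.abs (x k) + acc) 0 s)%Z.
  elim => [|a t IH] /=; lia.
elim: s => [|a s IH] //=. rewrite seq.in_cons => /orP [/eqP ->|H].
specialize (Hn s). lia.
specialize (IH H). lia.
Qed.

Lemma foldr_sum_le (x : pt d) (s : seq.seq 'I_d) m :
  (forall k, Z.abs (x k) <= m)%Z ->
  (foldr (fun k acc => Z.abs (x k) + acc) 0 s <= Z.of_nat (size s) * m)%Z.
Proof.
move=> H. elim: s => [|a s IH]; first by simpl; lia. have -> : size (a :: s) = S (size s) by []. rewrite Nat2Z.inj_succ. cbn [foldr]. specialize (H a). lia.
Qed.

Lemma linf_ge (x : pt d) k : (Z.abs (x k) <= linf x)%Z.
Proof. apply: foldr_max_ge. by rewrite mem_enum. Qed.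

Lemma linf_le (x : pt d) m : (0 <= m)%Z -> (forall k, Z.abs (x k) <= m)%Z -> (linf x <= m)%Z.
Proof. apply: foldr_max_le. Qed.

Lemma linf_nonneg (x : pt d) : (0 <= linf x)%Z.
Proof. apply: foldr_max_nonneg. Qed.

Lemma l1_ge (x : pt d) k : (Z.abs (x k) <= l1 x)%Z.
Proof. apply: foldr_sum_ge. by rewrite mem_enum. Qed.

Lemma l1_le_linf (x : pt d) : (l1 x <= Z.of_nat d * linf x)%Z.
Proof.
rewrite /l1. have := @foldr_sum_le x (enum (ordinal d)) (linf x) (fun k => linf_ge x k).
by rewrite size_enum_ord.
Qed.

Lemma l1_nonneg (x : pt d) : (0 <= l1 x)%Z.
Proof. rewrite /l1. elim: (enum _) => [|a t IH] /=; lia. Qed.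

Lemma linf_le_l1 (x : pt d) : (linf x <= l1 x)%Z.
Proof. apply: linf_le. apply: l1_nonneg. move=> k; apply: l1_ge. Qed.

End Norms.

Definition bP (P : Prop) : bool := if excluded_middle_informative P then true else false.
Lemma bP_true (P : Prop) : bP P = true <-> P.
Proof. rewrite /bP. case: excluded_middle_informative => H; split => //. Qed.
Lemma bP_false (P : Prop) : bP P = false <-> ~ P.
Proof. rewrite /bP. case: excluded_middle_informative => H; split => //. Qed.

Lemma In_mem (T : eqType) (x : T) (s : seq.seq T) : In x s <-> x \in s.
Proof.
elim: s => [|a s IH] /=. split => //.
rewrite seq.in_cons. split.
  case=> [->|H]. by rewrite eqxx. apply/orP; right; by apply/IH.
case/orP=> [/eqP ->|H]. by left. right; by apply/IH.
Qed.

Lemma uniq_NoDup (T : eqType) (s : seq.seq T) : uniq s -> NoDup s.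
Proof.
elim: s => [|a s IH] /=. constructor.
case/andP=> Ha Hs. constructor. move/In_mem => H. by rewrite H in Ha. by apply: IH.
Qed.

Lemma length_size (T : Type) (s : seq.seq T) : length s = size s.
Proof. by elim: s => [|a s IH] //=; rewrite IH. Qed.

Section Points.
Variable d : nat.

Lemma pt_ext (a b : pt d) : (forall k, a k = b k) -> a = b.
Proof. move=> H; by apply: functional_extensionality. Qed.

Lemma linf_ext (x y : pt d) : (forall k, Z.abs (x k) = Z.abs (y k)) -> linf x = linf y.
Proof. move=> H. rewrite /linf. elim: (enum _) => [|a t IH] //=. by rewrite H IH. Qed.

Lemma l1_ext (x y : pt d) : (forall k, Z.abs (x k) = Z.abs (y k)) -> l1 x = l1 y.
Proof. move=> H. rewrite /l1. elim: (enum _) => [|a t IH] //=. by rewrite H IH. Qed.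

Lemma linf_sym (a b : pt d) : linf (psub a b) = linf (psub b a).
Proof. apply: linf_ext => k. rewrite /psub. lia. Qed.

Lemma l1_sym (a b : pt d) : l1 (psub a b) = l1 (psub b a).
Proof. apply: l1_ext => k. rewrite /psub. lia. Qed.

Lemma linf_tri (a b c : pt d) :
  (linf (psub a c) <= linf (psub a b) + linf (psub b c))%Z.
Proof.
apply: linf_le. have := linf_nonneg (psub a b). have := linf_nonneg (psub b c). lia.
move=> k. have := linf_ge (psub a b) k. have := linf_ge (psub b c) k.
rewrite /psub. lia.
Qed.

Lemma l1_pos (a b : pt d) : a <> b -> (1 <= l1 (psub a b))%Z.
Proof.
move=> H. have [k Hk] : exists k, a k <> b k.
  apply: NNPP => H1. apply: H. apply: pt_ext => k. apply: NNPP => H2. apply: H1. by exists k.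
have := l1_ge (psub a b) k. rewrite /psub. lia.
Qed.

Lemma linf_pos (a b : pt d) : a <> b -> (1 <= linf (psub a b))%Z.
Proof.
move=> H. have [k Hk] : exists k, a k <> b k.
  apply: NNPP => H1. apply: H. apply: pt_ext => k. apply: NNPP => H2. apply: H1. by exists k.
have := linf_ge (psub a b) k. rewrite /psub. lia.
Qed.

Lemma In_cube_enum (q i : pt d) (l : nat) : In i (cube_enum q l) <-> cube q l i.
Proof.
rewrite /cube_enum /cube. rewrite in_map_iff. split.
  case=> f [<- _]. apply: linf_le. lia. move=> k. rewrite /psub.
  have := ltn_ord (f k). move: (nat_of_ord (f k)) => n /ltP. rewrite -muln2 -multE. lia.
move=> H. pose f : {ffun 'I_d -> 'I_(l.*2.+1)} :=
  [ffun k => inord (Z.to_nat (i k - q k + Z.of_nat l))].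
exists f. split; last by apply/In_mem; rewrite mem_enum.
apply: pt_ext => k. rewrite /f ffunE.
have Hk := linf_ge (psub i q) k. rewrite /psub in Hk H.
rewrite inordK. rewrite Z2Nat.id; lia.
apply/ltP. rewrite -muln2 -multE. lia.
Qed.

Lemma NoDup_cube_enum (q : pt d) (l : nat) : NoDup (cube_enum q l).
Proof.
rewrite /cube_enum. apply: NoDup_map_NoDup_ForallPairs.
  move=> f g _ _ H. apply/ffunP => k. apply: ord_inj.
  have := f_equal (fun h => h k) H => /= H2. lia.
apply: uniq_NoDup. apply: enum_uniq.
Qed.

Lemma length_cube_enum (q : pt d) (l : nat) : length (cube_enum q l) = expn (l.*2.+1) d.
Proof.
rewrite /cube_enum length_map length_size -cardE card_ffun !card_ord. done.
Qed.

Lemma count_cube (c : pt d) (R : nat) (L : list (pt d)) :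
  NoDup L -> (forall j, In j L -> (linf (psub j c) <= Z.of_nat R)%Z) ->
  (length L <= expn (R.*2.+1) d)%coq_nat.
Proof.
move=> H1 H2. rewrite -(length_cube_enum c R). apply: NoDup_incl_length => //.
move=> j Hj. apply/In_cube_enum. by apply: H2.
Qed.

End Points.

Open Scope R_scope.

Section Sums.
Variable A : Type.
Implicit Types (L : list A) (f g : A -> R).

Lemma sum_app f L1 L2 : list_sumR (map f (L1 ++ L2)) = list_sumR (map f L1) + list_sumR (map f L2).
Proof. elim: L1 => [|a L IH] /=. lra. rewrite IH. lra. Qed.

Lemma sum_le f g L : (forall x, In x L -> f x <= g x) -> list_sumR (map f L) <= list_sumR (map g L).
Proof.
elim: L => [|a L IH] /= H. lra.
have := H a (or_introl erefl). have : list_sumR (map f L) <= list_sumR (map g L).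
  apply: IH => x Hx. apply: H. by right.
lra.
Qed.

Lemma sum_nonneg f L : (forall x, In x L -> 0 <= f x) -> 0 <= list_sumR (map f L).
Proof.
elim: L => [|a L IH] /= H. lra.
have := H a (or_introl erefl). have : 0 <= list_sumR (map f L).
  apply: IH => x Hx. apply: H. by right.
lra.
Qed.

Lemma sum_filter f (b : A -> bool) L :
  list_sumR (map f L) = list_sumR (map f (filter b L)) + list_sumR (map f (filter (fun x => negb (b x)) L)).
Proof. elim: L => [|a L IH] /=. lra. case: (b a) => /=; rewrite IH; lra. Qed.

Lemma sum_filter_le f (b : A -> bool) L : (forall x, In x L -> 0 <= f x) ->
  list_sumR (map f (filter b L)) <= list_sumR (map f L).
Proof.
move=> H. rewrite (sum_filter f b L). have : 0 <= list_sumR (map f (filter (fun x => negb (b x)) L)).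
  apply: sum_nonneg => x /filter_In [Hx _]. by apply: H.
lra.
Qed.

Lemma sum_const_le f L c : (forall x, In x L -> f x <= c) -> list_sumR (map f L) <= INR (length L) * c.
Proof.
elim: L => [|a L IH] H. simpl; lra.
rewrite [length (a :: L)]/= S_INR /=.
have := H a (or_introl erefl). have : list_sumR (map f L) <= INR (length L) * c.
  apply: IH => x Hx. apply: H. by right.
lra.
Qed.

Lemma sum_const_ge f L c : (forall x, In x L -> c <= f x) -> INR (length L) * c <= list_sumR (map f L).
Proof.
elim: L => [|a L IH] H. simpl; lra.
rewrite [length (a :: L)]/= S_INR /=.
have := H a (or_introl erefl). have : INR (length L) * c <= list_sumR (map f L).
  apply: IH => x Hx. apply: H. by right.
lra.
Qed.

Lemma sum_scal f L a : list_sumR (map (fun x => a * f x) L) = a * list_sumR (map f L).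
Proof. elim: L => [|b L IH] /=. lra. rewrite IH. lra. Qed.

Lemma sum_plus f g L : list_sumR (map (fun x => f x + g x) L) = list_sumR (map f L) + list_sumR (map g L).
Proof. elim: L => [|b L IH] /=. lra. rewrite IH. lra. Qed.

Lemma sum_if f (b : A -> bool) L :
  list_sumR (map (fun x => if b x then f x else 0) L) = list_sumR (map f (filter b L)).
Proof. elim: L => [|a L IH] /=. lra. case: (b a) => /=; rewrite IH; lra. Qed.

Lemma sum_ext f g L : (forall x, In x L -> f x = g x) -> list_sumR (map f L) = list_sumR (map g L).
Proof. move=> H. apply: Rle_antisym; apply: sum_le => x Hx; rewrite H //; lra. Qed.

End Sums.

Lemma sum_map_comp (A B : Type) (h : A -> B) (f : B -> R) L :
  list_sumR (map f (map h L)) = list_sumR (map (fun x => f (h x)) L).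
Proof. by rewrite map_map. Qed.

Lemma Rpower_pos x y : 0 < Rpower x y.
Proof. rewrite /Rpower. apply: exp_pos. Qed.

Lemma exp_le_mono x y : x <= y -> exp x <= exp y.
Proof. case=> [H|->]. left; by apply: exp_increasing. lra. Qed.

Lemma ln_le_mono x y : 0 < x -> x <= y -> ln x <= ln y.
Proof. move=> H0 [H|->]. left; by apply: ln_increasing. lra. Qed.

Lemma Rpower_base_anti a b y : 0 < a <= b -> y <= 0 -> Rpower b y <= Rpower a y.
Proof.
move=> [Ha Hab] Hy. rewrite /Rpower. apply: exp_le_mono.
have := ln_le_mono Ha Hab. nra.
Qed.

Lemma Rpower_base_mono a b y : 0 < a <= b -> 0 <= y -> Rpower a y <= Rpower b y.
Proof.
move=> [Ha Hab] Hy. rewrite /Rpower. apply: exp_le_mono.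
have := ln_le_mono Ha Hab. nra.
Qed.

Lemma Rpower_exp_mono a y z : 1 <= a -> y <= z -> Rpower a y <= Rpower a z.
Proof. move=> H1 H2. by apply: Rle_Rpower. Qed.

Lemma Rpower_plus' x y z : Rpower z (x + y) = Rpower z x * Rpower z y.
Proof. by rewrite Rpower_plus. Qed.

Lemma INR_expn a n : INR (expn a n) = INR a ^ n.
Proof. elim: n => [|n IH]. by rewrite expn0. by rewrite expnS -multE mult_INR IH. Qed.

Lemma Rpower2_lt1 s : 0 < s -> Rpower 2 (-s) < 1.
Proof. move=> Hs. rewrite -(Rpower_O 2); last lra. apply: Rpower_lt; lra. Qed.

Definition Kd (d : nat) (s : R) (x : Z) := Rpower (IZR x) (-(INR d + s)).
Definition Ct (d : nat) (s : R) := 5 ^ d / (1 - Rpower 2 (-s)).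

Lemma Ct_pos d s : 0 < s -> 0 < Ct d s.
Proof.
move=> Hs. rewrite /Ct. have := Rpower2_lt1 Hs. move=> H.
apply: Rdiv_lt_0_compat. apply: pow_lt; lra. lra.
Qed.

Section Tail.
Variables (d : nat) (s : R).
Hypothesis Hs : 0 < s.

Lemma Kd_le (x : Z) (t : R) : 0 < t -> t <= IZR x -> Kd d s x <= Rpower t (-(INR d + s)).
Proof.
move=> H1 H2. rewrite /Kd. apply: Rpower_base_anti. lra.
have := pos_INR d. lra.
Qed.

Lemma pow_Rpower_comb (t : R) : 0 < t ->
  t ^ d * Rpower t (-(INR d + s)) = Rpower t (-s).
Proof.
move=> Ht. rewrite -Rpower_pow // -Rpower_plus. f_equal. ring.
Qed.

Lemma tail_aux (c : pt d) m : forall (t : nat) (L : list (pt d)), (1 <= t)%coq_nat -> NoDup L ->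
  (forall j, In j L -> Z.of_nat t <= linf (psub j c) < Z.of_nat (2 ^ m * t))%Z ->
  list_sumR (map (fun j => Kd d s (l1 (psub j c))) L) <= Ct d s * Rpower (INR t) (-s).
Proof.
have Hct := Ct_pos d Hs.
elim: m => [|m IH] t L Ht HL HLj.
  case: L HL HLj => [|a L] HL HLj /=.
    have := Rpower_pos (INR t) (-s). nra.
  have := HLj a (or_introl erefl). rewrite ?expn0 ?mul1n ?Nat.pow_0_r ?Nat.mul_1_l. lia.
have Htr : 0 < INR t by apply: lt_0_INR; lia.
pose b := fun j : pt d => bP (linf (psub j c) < Z.of_nat (2 * t))%Z.
rewrite (sum_filter _ b).
have H1 : list_sumR (map (fun j => Kd d s (l1 (psub j c))) (filter b L)) <= 5 ^ d * Rpower (INR t) (-s).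
  apply: Rle_trans. apply: (@sum_const_le _ _ _ (Rpower (INR t) (-(INR d + s)))).
    move=> j /filter_In [Hj Hb]. apply: Kd_le => //.
    have := HLj j Hj. have := linf_le_l1 (psub j c). rewrite INR_IZR_INZ.
    move=> ? ?. apply: IZR_le. lia.
  have Hlen : (length (filter b L) <= expn ((2 * t).*2.+1) d)%coq_nat.
    apply: (count_cube c). by apply: NoDup_filter.
    move=> j /filter_In [Hj /bP_true Hb]. lia.
  apply: Rle_trans. apply: Rmult_le_compat_r. by apply: Rlt_le; apply: Rpower_pos.
    apply: le_INR. exact: Hlen.
  rewrite INR_expn. apply: Rle_trans. apply: Rmult_le_compat_r.
    by apply: Rlt_le; apply: Rpower_pos.
  apply: (pow_incr _ (5 * INR t)). split. apply: pos_INR.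
  rewrite -muln2 -multE !S_INR !mult_INR. simpl. have : 1 <= INR t by apply: (le_INR 1). lra.
  rewrite Rpow_mult_distr Rmult_assoc pow_Rpower_comb //. lra.
have H2 : list_sumR (map (fun j => Kd d s (l1 (psub j c))) (filter (fun x => ~~ b x) L)) <= Ct d s * Rpower (INR (2 * t)) (-s).
  apply: IH. lia. by apply: NoDup_filter.
  move=> j /filter_In [Hj Hb]. have := HLj j Hj. move/negbTE/bP_false: Hb => Hb.
  rewrite Nat.pow_succ_r'. set X := Nat.pow 2 m. nia.
have Ht2 : Rpower (INR (2 * t)) (-s) = Rpower 2 (-s) * Rpower (INR t) (-s).
  rewrite mult_INR /=. rewrite Rpower_mult_distr //; lra.
rewrite Ht2 in H2. have := Rpower2_lt1 Hs. move=> H3.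
have Hc : Ct d s * (1 - Rpower 2 (-s)) = 5 ^ d.
  rewrite /Ct. field. lra.
nra.
Qed.

Lemma list_bound (A : Type) (g : A -> nat) (L : list A) : exists M, forall x, In x L -> (g x <= M)%coq_nat.
Proof.
elim: L => [|a L [M HM]]. by exists 0%nat.
exists (Nat.max (g a) M) => x [<-|Hx]. lia. have := HM x Hx. lia.
Qed.

Lemma tail (c : pt d) (t : nat) (L : list (pt d)) : (1 <= t)%coq_nat -> NoDup L ->
  (forall j, In j L -> Z.of_nat t <= linf (psub j c))%Z ->
  list_sumR (map (fun j => Kd d s (l1 (psub j c))) L) <= Ct d s * Rpower (INR t) (-s).
Proof.
move=> Ht HL HLj. have [M HM] := list_bound (fun j => Z.to_nat (linf (psub j c))) L.
apply: (tail_aux c M) => // j Hj. split. by apply: HLj.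
have := HM j Hj. have := linf_nonneg (psub j c). have := Nat.pow_gt_lin_r 2 M.
move=> H1 H2 H3. have H4 : (2 ^ M <= Nat.pow 2 M * t)%coq_nat by nia. simpl in H3. lia.
Qed.

End Tail.

Lemma choose_R (d n : nat) : (1 <= d)%coq_nat -> (1 <= n)%coq_nat ->
  exists R, (1 <= R)%coq_nat /\ (expn R d <= n)%coq_nat /\ (n < expn R.+1 d)%coq_nat.
Proof.
move=> Hd. elim: n => [|n IH] Hn. lia.
case: (Nat.eq_dec n 0) => [->|Hn0].
  exists 1%nat. rewrite exp1n. split. lia. split. lia.
  have : leq (expn 1 d).+1 (expn 2 d) by rewrite ltn_exp2r //; apply/leP; lia.
  rewrite exp1n => /ltP. lia.
have [R [H1 [H2 H3]]] := IH ltac:(lia).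
case: (Nat.eq_dec n.+1 (expn R.+1 d)) => H4.
  exists R.+1. split. lia. split. lia.
  have : leq (expn R.+1 d).+1 (expn R.+2 d) by rewrite ltn_exp2r //; apply/leP; lia.
  move/ltP. lia.
exists R. lia.
Qed.

Section Pairs.
Variables A B : Type.

Definition pairs (F : list A) (G : A -> list B) : list (A * B) :=
  flat_map (fun i => map (fun j => (i, j)) (G i)) F.

Lemma In_pairs F G p : In p (pairs F G) <-> In (fst p) F /\ In (snd p) (G (fst p)).
Proof.
rewrite /pairs in_flat_map. split.
  case=> i [Hi /in_map_iff [j [<- Hj]]] /=. by [].
case: p => i j /= [Hi Hj]. exists i. split => //. apply/in_map_iff. by exists j.
Qed.

Lemma NoDup_pairs F G : NoDup F -> (forall i, NoDup (G i)) -> NoDup (pairs F G).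
Proof.
elim: F => [|a F IH] HF HG /=. constructor.
inversion HF; subst. apply: NoDup_app.
  apply: NoDup_map_NoDup_ForallPairs. by move=> x y _ _ [->]. by [].
  by apply: IH.
move=> p /in_map_iff [j [<- _]] /In_pairs /= [H _]. by [].
Qed.

Lemma sum_pairs F G (f : A * B -> R) :
  list_sumR (map f (pairs F G)) = list_sumR (map (fun i => list_sumR (map (fun j => f (i, j)) (G i))) F).
Proof.
elim: F => [|a F IH] //=. rewrite sum_app IH map_map. done.
Qed.

End Pairs.

Section Iso.
Variables (d : nat) (s : R).
Hypothesis Hd : (1 <= d)%coq_nat.
Hypothesis Hs : 0 < s < 1.

Definition ciso := Rpower (INR d) (-(INR d + s)) / 2 * Rpower 2 (- (s / INR d)).

Lemma ciso_pos : 0 < ciso.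
Proof. rewrite /ciso. have := Rpower_pos (INR d) (-(INR d + s)). have := Rpower_pos 2 (- (s / INR d)). nra. Qed.

Definition notinF (F : list (pt d)) (j : pt d) := negb (bP (In j F)).

Lemma iso (F : list (pt d)) : (1 <= length F)%coq_nat -> NoDup F -> exists R : nat,
  ciso * Rpower (INR (length F)) (1 - s / INR d) <=
  list_sumR (map (fun i => list_sumR (map (fun j => Kd d s (l1 (psub i j)))
      (filter (notinF F) (cube_enum i R)))) F).
Proof.
move=> HN HF. set N := length F.
have [R [HR1 [HR2 HR3]]] := choose_R (n := (2 * N)%coq_nat) Hd ltac:(lia).
exists R.
have HdR : 0 < INR d by apply: lt_0_INR; lia.
have HRr : 1 <= INR R by apply: (le_INR 1).
have HNr : 1 <= INR N by apply: (le_INR 1).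
pose c := Rpower (INR d) (-(INR d + s)) / 2 * Rpower (INR R) (-s).
have Hper : forall i, In i F -> c <= list_sumR (map (fun j => Kd d s (l1 (psub i j)))
      (filter (notinF F) (cube_enum i R))).
  move=> i Hi.
  have Hlen : INR (expn R d) / 2 <= INR (length (filter (notinF F) (cube_enum i R))).
    have H1 := filter_length (fun j => bP (In j F)) (cube_enum i R).
    have H2 : (length (filter (fun j => bP (In j F)) (cube_enum i R)) <= N)%coq_nat.
      apply: NoDup_incl_length. apply: NoDup_filter. apply: NoDup_cube_enum.
      by move=> j /filter_In [_ /bP_true].
    have H3 : (expn R.+1 d <= expn R.*2.+1 d)%coq_nat.
      apply/leP. rewrite leq_exp2r. apply/leP. lia. apply/leP; lia.
    have H4 : (expn R d <= expn R.+1 d)%coq_nat.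
      apply/leP. rewrite leq_exp2r. apply/leP. lia. apply/leP; lia.
    rewrite length_cube_enum in H1.
    have H5 : (expn R d <= 2 * length (filter (notinF F) (cube_enum i R)))%coq_nat.
      rewrite /notinF. lia.
    apply le_INR in H5. rewrite mult_INR in H5. simpl in H5. lra.
  apply: Rle_trans; last first.
    apply: (@sum_const_ge _ _ _ (Rpower (INR d * INR R) (-(INR d + s)))).
    move=> j /filter_In [Hj Hnj]. rewrite /Kd. apply: Rpower_base_anti.
      have Hij : i <> j. move=> Heq. subst j. move: Hnj. rewrite /notinF. move/negbTE/bP_false. by [].
      have := l1_pos Hij. have := l1_le_linf (psub i j). have := proj1 (In_cube_enum i j R) Hj.
      rewrite /cube linf_sym. move=> H1 H2 H3. split. apply: (IZR_lt 0). lia.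
      rewrite !INR_IZR_INZ -mult_IZR. apply: IZR_le. nia.
    have := pos_INR d. lra.
  rewrite /c. rewrite -Rpower_mult_distr; try lra.
  apply: Rle_trans; last first.
    apply: Rmult_le_compat_r. have := Rpower_pos (INR d) (-(INR d + s)). have := Rpower_pos (INR R) (-(INR d + s)). nra.
    exact: Hlen.
  rewrite INR_expn -Rpower_pow; last lra.
  have -> : Rpower (INR R) (- s) = Rpower (INR R) (INR d) * Rpower (INR R) (-(INR d + s)).
    rewrite -Rpower_plus. f_equal. ring.
  lra.
apply: Rle_trans; last first. apply: (@sum_const_ge _ _ _ c). exact: Hper.
rewrite /c /ciso.
have HRd : Rpower (INR R) (-s) >= Rpower 2 (-(s / INR d)) * Rpower (INR N) (-(s / INR d)).
  rewrite Rpower_mult_distr; try lra.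
  have -> : Rpower (INR R) (-s) = Rpower (Rpower (INR R) (INR d)) (-(s / INR d)).
    rewrite Rpower_mult. f_equal. field. lra.
  apply: Rle_ge. apply: Rpower_base_anti.
  split. apply: Rpower_pos.
  rewrite Rpower_pow; last lra. rewrite -INR_expn. have := le_INR _ _ HR2.
  rewrite mult_INR. simpl. lra.
  have : 0 < s / INR d by apply: Rdiv_lt_0_compat; lra. lra.
have -> : Rpower (INR N) (1 - s / INR d) = INR N * Rpower (INR N) (-(s / INR d)).
  rewrite Rpower_plus Rpower_1; lra.
have := Rpower_pos (INR d) (-(INR d + s)). have := Rpower_pos 2 (-(s / INR d)).
have := Rpower_pos (INR N) (-(s / INR d)).
move=> P1 P2 P3.
set X := Rpower (INR R) (-s) in HRd *.
have : Rpower (INR d) (- (INR d + s)) / 2 * (Rpower 2 (- (s / INR d)) * Rpower (INR N) (- (s / INR d)))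
       <= Rpower (INR d) (- (INR d + s)) / 2 * X.
  apply: Rmult_le_compat_l. lra. lra.
move=> H. change (length F) with N. have HN0 : 0 <= INR N by lra. have := Rmult_le_compat_l _ _ _ HN0 H. lra.
Qed.

End Iso.

Section Cancel.
Variables (d : nat) (J : pt d -> pt d -> R) (G : pt d -> Prop) (u v : config d).
Variable touch : pt d * pt d -> Prop.
Variables T B' : R.
Hypothesis Hle : H_le J G u v.
Hypothesis HT : forall L, NoDup L -> (forall p, In p L -> adm G p) -> partial_H J u L <= T.
Hypothesis Heq : forall p, ~ touch p -> pair_energy J u p = pair_energy J v p.
Hypothesis HB : forall Q, NoDup Q -> (forall p, In p Q -> adm G p /\ touch p) -> partial_H J v Q <= B'.

Lemma cancel P : NoDup P -> (forall p, In p P -> adm G p /\ touch p) -> partial_H J u P <= B'.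
Proof.
move=> HP HPt.
pose E := fun x => exists L, NoDup L /\ (forall p, In p L -> adm G p /\ ~ touch p) /\ x = partial_H J u L.
have HEb : bound E.
  exists T => x [L [HL [HLa ->]]]. apply: HT => // p Hp. by case: (HLa p Hp).
have HEn : exists x, E x. exists 0. exists nil. split. constructor. split => //.
have [C HC] := @completeness E HEb HEn.
apply: Rnot_lt_le => Hcon.
set eps := (partial_H J u P - B') / 3.
have Heps : 0 < eps by rewrite /eps; lra.
have [x [Ex Hx]] : exists x, E x /\ C - eps < x.
  apply: NNPP => H. have : C <= C - eps.
    apply: (proj2 HC) => x Ex. apply: Rnot_lt_le => Hx. apply: H. by exists x.
  lra.
case: Ex => Lc [HLc [HLca Hxe]].
have HL : NoDup (Lc ++ P)%list.
  apply: NoDup_app => // p Hp1 Hp2. case: (HLca p Hp1) => _. apply. by case: (HPt p Hp2).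
have HLa : forall p, In p (Lc ++ P)%list -> adm G p.
  move=> p Hp. case: (in_app_or _ _ _ Hp) => H. by case: (HLca p H). by case: (HPt p H).
have [L' [HL'1 [HL'2 HL'3]]] := @Hle (Lc ++ P)%list HL HLa eps Heps.
pose tb := fun p => bP (touch p).
have H1 : partial_H J v (filter tb L') <= B'.
  apply: HB. by apply: NoDup_filter.
  move=> p /filter_In [Hp /bP_true Ht]. split => //. by apply: HL'2.
have H2 : partial_H J v (filter (fun p => ~~ tb p) L') <= C.
  have -> : partial_H J v (filter (fun p => ~~ tb p) L') = partial_H J u (filter (fun p => ~~ tb p) L').
    rewrite /partial_H. apply: sum_ext => p /filter_In [_ /negbTE /bP_false Ht]. by rewrite Heq.
  apply: (proj1 HC). exists (filter (fun p => ~~ tb p) L'). split. by apply: NoDup_filter.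
  split => //. move=> p /filter_In [Hp /negbTE /bP_false Ht]. split => //. by apply: HL'2.
have H3 : partial_H J v L' = partial_H J v (filter tb L') + partial_H J v (filter (fun p => ~~ tb p) L').
  by rewrite /partial_H (sum_filter _ tb).
have H4 : partial_H J u (Lc ++ P)%list = partial_H J u Lc + partial_H J u P.
  by rewrite /partial_H sum_app.
rewrite -Hxe in H4. rewrite /eps in Hx HL'3. lra.
Qed.

End Cancel.

Lemma Rpower_1_base y : Rpower 1 y = 1.
Proof. by rewrite /Rpower ln_1 Rmult_0_r exp_0. Qed.

Lemma sv_prod a b : sv a * sv b = if a == b then 1 else -1.
Proof. case: a; case: b => /=; lra. Qed.

Section Group.
Variables (A B : Type).

Lemma group_sum (F : list A) (Q : list (A * B)) (g : A * B -> R) : NoDup F ->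
  (forall p, In p Q -> In (fst p) F) ->
  list_sumR (map g Q) = list_sumR (map (fun i => list_sumR (map (fun j => g (i, j))
     (map snd (filter (fun p => bP (fst p = i)) Q)))) F).
Proof.
elim: F Q => [|a F IH] Q HF HQ.
  case: Q HQ => [|p Q] HQ //=. by case: (HQ p (or_introl erefl)).
inversion HF; subst. rewrite /= (sum_filter g (fun p => bP (fst p = a)) Q).
rewrite (IH (filter (fun p => ~~ bP (fst p = a)) Q)) //; last first.
  move=> p /filter_In [Hp /negbTE /bP_false Hn]. case: (HQ p Hp) => // H. exfalso; apply: Hn; by rewrite H.
congr (_ + _).
  rewrite map_map. apply: sum_ext => p /filter_In [_ /bP_true <-]. by case: p.
apply: sum_ext => i Hi. f_equal. f_equal. f_equal.
elim: Q {HQ} => [|p Q IHQ] //=.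
case Hpa: (bP (p.1 = a)) => /=; case Hpi: (bP (p.1 = i)) => //=; rewrite IHQ //.
move/bP_true: Hpa => Hpa. move/bP_true: Hpi => Hpi. exfalso. apply: H1. by rewrite -Hpa Hpi.
Qed.

Lemma NoDup_snd_filter (Q : list (A * B)) (i : A) : NoDup Q -> NoDup (map snd (filter (fun p => bP (fst p = i)) Q)).
Proof.
move=> HQ. apply: NoDup_map_NoDup_ForallPairs; last by apply: NoDup_filter.
move=> [x1 y1] [x2 y2] /filter_In [_ /bP_true /= H1] /filter_In [_ /bP_true /= H2] /= ->. by subst.
Qed.

Lemma In_snd_filter (Q : list (A * B)) (i : A) j : In j (map snd (filter (fun p => bP (fst p = i)) Q)) -> In (i, j) Q.
Proof.
move=> /in_map_iff [[x y] [Hy /filter_In [H Hx]]]. move/bP_true: Hx => /= Hx. simpl in Hy. by subst.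
Qed.

End Group.

Definition pswap {A B : Type} (p : A * B) : B * A := (snd p, fst p).

Lemma NoDup_swap (A B : Type) (L : list (A * B)) : NoDup L -> NoDup (map pswap L).
Proof.
move=> H. apply: NoDup_map_NoDup_ForallPairs => //. move=> [a b] [c e] _ _ [-> ->]. by [].
Qed.

Section JBounds.
Variables (d : nat) (s lam Lam : R) (J : pt d -> pt d -> R).
Hypothesis Hs : 0 < s.
Hypothesis HJ0 : forall i j, 0 <= J i j.
Hypothesis HJ1 : J1 J.
Hypothesis HJ2 : J2 J.
Hypothesis HJP : JP J s lam Lam.
Hypothesis HLam : 0 <= Lam.

Lemma J_K i j : i <> j -> lam * Kd d s (l1 (psub i j)) <= J i j <= Lam * Kd d s (l1 (psub i j)).
Proof. move=> H. have H1 := l1_pos H. apply: HJP. lia. Qed.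

Lemma pe_bounds (u : config d) p : 0 <= pair_energy J u p <= 2 * J (fst p) (snd p).
Proof. rewrite /pair_energy sv_prod. have := HJ0 (fst p) (snd p). case: (_ == _); lra. Qed.

Lemma pe_sym (u : config d) a b : pair_energy J u (a, b) = pair_energy J u (b, a).
Proof. rewrite /pair_energy /= HJ1. ring. Qed.

Lemma row_tail (i : pt d) (t : nat) (L : list (pt d)) : (1 <= t)%coq_nat -> NoDup L ->
  (forall j, In j L -> Z.of_nat t <= linf (psub j i))%Z ->
  list_sumR (map (fun j => J i j) L) <= Lam * (Ct d s * Rpower (INR t) (-s)).
Proof.
move=> Ht HL HLj.
have Hlam : 0 <= Lam by lra.
apply: Rle_trans. apply: (@sum_le _ _ (fun j => Lam * Kd d s (l1 (psub j i)))).
  move=> j Hj. have Hij : i <> j. move=> E. subst j. have := HLj i Hj. rewrite /psub.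
    have : linf (fun k => (i k - i k)%Z) = 0%Z. apply: Z.le_antisymm. apply: linf_le => // k. lia. apply: linf_nonneg.
    lia.
  rewrite l1_sym. by case: (J_K Hij).
rewrite sum_scal. apply: Rmult_le_compat_l => //. by apply: tail.
Qed.

Lemma row_all (i : pt d) (L : list (pt d)) : NoDup L ->
  list_sumR (map (fun j => J i j) L) <= Lam * Ct d s.
Proof.
move=> HL. rewrite (sum_filter _ (fun j => bP (j = i))).
have -> : list_sumR (map (fun j => J i j) (filter (fun j => bP (j = i)) L)) = 0.
  rewrite (@sum_ext _ _ (fun _ => 0)). elim: (filter _ _) => [|a t IH] //=. rewrite IH; lra.
  move=> j /filter_In [_ /bP_true ->]. apply: HJ2.
have := @row_tail i 1 (filter (fun j => ~~ bP (j = i)) L) (le_n 1) (NoDup_filter _ HL).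
rewrite Rpower_1_base Rmult_1_r. move=> H. rewrite Rplus_0_l. apply: H.
move=> j /filter_In [_ /negbTE /bP_false Hj]. have := linf_pos Hj. lia.
Qed.

Lemma fst_bound (Gl : list (pt d)) (Q : list (pt d * pt d)) : NoDup Gl -> NoDup Q ->
  (forall p, In p Q -> In (fst p) Gl) ->
  list_sumR (map (fun p => J (fst p) (snd p)) Q) <= INR (length Gl) * (Lam * Ct d s).
Proof.
move=> HG HQ HQG. rewrite (@group_sum _ _ Gl Q (fun p => J (fst p) (snd p)) HG HQG). apply: sum_const_le => i Hi /=.
apply: row_all. by apply: NoDup_snd_filter.
Qed.

Lemma T_bound (G : pt d -> Prop) (Gl : list (pt d)) (u : config d) :
  NoDup Gl -> (forall x, G x <-> In x Gl) ->
  forall L, NoDup L -> (forall p, In p L -> adm G p) ->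
  partial_H J u L <= 4 * INR (length Gl) * (Lam * Ct d s).
Proof.
move=> HG HGl L HL HLa. rewrite /partial_H (sum_filter _ (fun p => bP (G (fst p)))).
have H1 : forall Q, NoDup Q -> (forall p, In p Q -> G (fst p)) ->
    list_sumR (map (pair_energy J u) Q) <= 2 * (INR (length Gl) * (Lam * Ct d s)).
  move=> Q HQ HQG. apply: Rle_trans.
    apply: (@sum_le _ _ (fun p => 2 * J (fst p) (snd p))). move=> p _. by case: (pe_bounds u p).
  rewrite sum_scal. apply: Rmult_le_compat_l. lra. apply: fst_bound => // p Hp. apply/HGl. by apply: HQG.
have H2 := H1 _ (NoDup_filter _ HL) (fun p Hp => proj1 (bP_true _) (proj2 (proj1 (filter_In _ _ _) Hp))).
have H3 : list_sumR (map (pair_energy J u) (filter (fun p => ~~ bP (G (fst p))) L)) =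
          list_sumR (map (pair_energy J u) (map pswap (filter (fun p => ~~ bP (G (fst p))) L))).
  rewrite map_map. apply: sum_ext => [[a b]] _. by rewrite pe_sym.
have H4 := H1 _ (NoDup_swap (NoDup_filter (fun p => ~~ bP (G (fst p))) HL)).
rewrite H3. have : list_sumR (map (pair_energy J u) (map pswap (filter (fun p => ~~ bP (G (fst p))) L))) <= 2 * (INR (length Gl) * (Lam * Ct d s)).
  apply: H4. move=> p /in_map_iff [[a b] [<- /filter_In [Hq /negbTE /bP_false Hn]]] /=.
  case: (HLa _ Hq) => //.
lra.
Qed.
Lemma bP_T (P : Prop) : P -> bP P = true. Proof. by move/bP_true. Qed.
Lemma bP_F (P : Prop) : ~ P -> bP P = false. Proof. by move/bP_false. Qed.

Lemma min_flip (G : pt d -> Prop) (Gl : list (pt d)) (u : config d) (F : list (pt d)) (B : R) :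
  NoDup Gl -> (forall x, G x <-> In x Gl) -> minimizer J G u -> NoDup F ->
  (forall i, In i F -> G i /\ u i = true) ->
  (forall Q, NoDup Q -> (forall p, In p Q -> In (fst p) F /\ ~ In (snd p) F /\ u (snd p) = true) ->
     list_sumR (map (fun p => J (fst p) (snd p)) Q) <= B) ->
  forall P, NoDup P -> (forall p, In p P -> In (fst p) F /\ ~ In (snd p) F /\ u (snd p) = false) ->
     list_sumR (map (fun p => J (fst p) (snd p)) P) <= 2 * B.
Proof.
move=> HGl HG Hmin HF HFG HB P HP HPF.
pose v := fun x => if bP (In x F) then false else u x.
have Hv : forall x, ~ G x -> v x = u x.
  move=> x Hx. rewrite /v bP_F //. move=> Hx2. apply: Hx. by case: (HFG x Hx2).
have Hle := Hmin v Hv.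
pose touch := fun p : pt d * pt d => In (fst p) F \/ In (snd p) F.
pose c1 := fun p : pt d * pt d => bP (In (fst p) F /\ ~ In (snd p) F /\ u (snd p) = true).
pose c2 := fun p : pt d * pt d => bP (In (snd p) F /\ ~ In (fst p) F /\ u (fst p) = true).
pose g := fun p : pt d * pt d => (if c1 p then 2 * J (fst p) (snd p) else 0) + (if c2 p then 2 * J (fst p) (snd p) else 0).
have HB0 : 0 <= B.
  have := HB nil (NoDup_nil _). simpl. apply. by [].
have Hcan := @cancel d J G u v touch (4 * INR (length Gl) * (Lam * Ct d s)) (4 * B) Hle.
have Hcan2 : forall P, NoDup P -> (forall p, In p P -> adm G p /\ touch p) -> partial_H J u P <= 4 * B.
  apply: Hcan.
  - by apply: T_bound.
  - move=> [a b] /= Ht. rewrite /pair_energy /v /=. rewrite !bP_F //; move=> H; apply: Ht; by [left|right].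
  - move=> Q HQ HQt. rewrite /partial_H. apply: (@Rle_trans _ (list_sumR (map g Q))).
      apply: sum_le => [[a b]] Hp. case: (HQt _ Hp) => _ /= Ht.
      rewrite /g /c1 /c2 /pair_energy /v /=. have := HJ0 a b. move=> Hab.
      case: (classic (In a F)) => Ha; case: (classic (In b F)) => Hb.
      + rewrite (bP_T Ha) (bP_T Hb) /=. case: (bP _); case: (bP _); lra.
      + rewrite (bP_T Ha) (bP_F Hb) /=. rewrite (bP_F (P := (In b F /\ _))); last by case.
        case Hub: (u b) => /=.
          rewrite bP_T //. lra.
        rewrite bP_F; last by case=> _ [_ ].
        lra.
      + rewrite (bP_F Ha) (bP_T Hb) /=. rewrite (bP_F (P := (In a F /\ _))); last by case.
        case Hua: (u a) => /=.
          rewrite bP_T //. lra.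
        rewrite bP_F; last by case=> _ [_ ].
        lra.
      + exfalso. by case: Ht.
    rewrite /g sum_plus !sum_if !sum_scal.
    have H1 : list_sumR (map (fun p => J (fst p) (snd p)) (filter c1 Q)) <= B.
      apply: HB. by apply: NoDup_filter. by move=> p /filter_In [_ /bP_true].
    have H2 : list_sumR (map (fun p => J (fst p) (snd p)) (filter c2 Q)) <= B.
      have -> : list_sumR (map (fun p => J (fst p) (snd p)) (filter c2 Q)) =
                list_sumR (map (fun p => J (fst p) (snd p)) (map pswap (filter c2 Q))).
        rewrite map_map. apply: sum_ext => [[a b]] _ /=. by rewrite HJ1.
      apply: HB. apply: NoDup_swap. by apply: NoDup_filter.
      move=> p /in_map_iff [[a b] [<- /filter_In [_ /bP_true /= [K1 [K2 K3]]]]] /=. by [].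
    lra.
have := Hcan2 P HP. rewrite /partial_H.
have -> : list_sumR (map (pair_energy J u) P) = 2 * list_sumR (map (fun p => J (fst p) (snd p)) P).
  rewrite -sum_scal. apply: sum_ext => [[a b]] Hp. case: (HPF _ Hp) => /= Ha [Hb Hub].
  rewrite /pair_energy /= Hub. case: (HFG a Ha) => _ ->. simpl. ring.
move=> H. have : 2 * list_sumR (map (fun p => J (fst p) (snd p)) P) <= 4 * B.
  apply: H. move=> [a b] Hp. case: (HPF _ Hp) => /= Ha _. split. left. by case: (HFG a Ha).
  by left.
lra.
Qed.

End JBounds.

Fixpoint rsum (f : nat -> R) (n : nat) : R :=
  match n with O => 0 | S n' => rsum f n' + f n' end.

Lemma rsum_le f g n : (forall k, (k < n)%coq_nat -> f k <= g k) -> rsum f n <= rsum g n.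
Proof.
elim: n => [|n IH] H /=. lra. have := H n (Nat.lt_succ_diag_r n).
have : rsum f n <= rsum g n. apply: IH => k Hk. apply: H. lia. lra.
Qed.

Lemma rsum_nonneg f n : (forall k, 0 <= f k) -> 0 <= rsum f n.
Proof. move=> H. elim: n => [|n IH] /=. lra. have := H n. lra. Qed.

Lemma rsum_mono_n f n m : (forall k, 0 <= f k) -> (n <= m)%coq_nat -> rsum f n <= rsum f m.
Proof.
move=> H. elim: m => [|m IH] Hnm. have -> : n = 0%nat by lia. lra.
case: (Nat.eq_dec n m.+1) => [->|Hne]. lra.
simpl. have := IH ltac:(lia). have := H m. lra.
Qed.

Lemma rsum_shift f m n :
  rsum (fun k => if Nat.leb m k then f (k - m)%coq_nat else 0) (m + n)%coq_nat = rsum f n.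
Proof.
have H0 : forall j, (j <= m)%coq_nat -> rsum (fun k => if Nat.leb m k then f (k - m)%coq_nat else 0) j = 0.
  elim => [|j IH] Hj /=. done. rewrite IH; last lia.
  have -> : Nat.leb m j = false by apply/Nat.leb_gt; lia. lra.
elim: n => [|n IH]. rewrite Nat.add_0_r. by apply: H0.
rewrite Nat.add_succ_r /= IH. have -> : Nat.leb m (m + n) = true by apply/Nat.leb_le; lia.
by have -> : (m + n - m)%coq_nat = n by lia.
Qed.

Lemma rsum_shift_le f m n : (forall k, 0 <= f k) ->
  rsum (fun k => if Nat.leb m k then f (k - m)%coq_nat else 0) n <= rsum f n.
Proof.
move=> Hf. case: (le_lt_dec n m) => Hnm.
  have -> : rsum (fun k => if Nat.leb m k then f (k - m)%coq_nat else 0) n = 0.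
    elim: n Hnm => [|j IH] Hj /=. done. rewrite IH; last lia.
    have -> : Nat.leb m j = false by apply/Nat.leb_gt; lia. lra.
  by apply: rsum_nonneg.
have -> : n = (m + (n - m))%coq_nat by lia. rewrite rsum_shift.
apply: rsum_mono_n => //. lia.
Qed.

Lemma rsum_swap (A : Type) (g : nat -> A -> R) (L : list A) n :
  rsum (fun k => list_sumR (map (g k) L)) n = list_sumR (map (fun i => rsum (fun k => g k i) n) L).
Proof.
elim: n => [|n IH] /=. elim: L => [|a L IHL] //=. rewrite -IHL. lra.
rewrite IH -sum_plus. done.
Qed.

Lemma rsum_const_ge f n c : (forall k, (k < n)%coq_nat -> c <= f k) -> INR n * c <= rsum f n.
Proof.
elim: n => [|n IH] H. simpl; lra. rewrite S_INR /=. have := H n (Nat.lt_succ_diag_r n).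
have : INR n * c <= rsum f n. apply: IH => k Hk. apply: H. lia. lra.
Qed.

Section Sbound.
Variable s : R.
Hypothesis Hs : 0 < s < 1.

Lemma mvt_step (n : R) : 1 <= n ->
  (1 - s) * Rpower (n + 1) (-s) <= Rpower (n + 1) (1 - s) - Rpower n (1 - s).
Proof.
move=> Hn.
have [c [Hc1 Hc2]] := MVT_cor2 (fun x => Rpower x (1 - s)) (fun x => (1 - s) * Rpower x (1 - s - 1)) n (n + 1) ltac:(lra)
  (fun c Hc => derivable_pt_lim_power c (1 - s) ltac:(lra)).
rewrite Hc1. have -> : (1 - s - 1) = -s by ring.
have : Rpower (n + 1) (-s) <= Rpower c (-s). apply: Rpower_base_anti; lra.
move=> H. have -> : n + 1 - n = 1 by ring. nra.
Qed.

Definition Sh (n : nat) := rsum (fun k => Rpower (INR (k + 1)) (-s)) n.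

Lemma Sh_bound n : (1 <= n)%coq_nat -> Sh n <= Rpower (INR n) (1 - s) / (1 - s).
Proof.
elim: n => [|n IH] Hn. lia.
case: (Nat.eq_dec n 0) => [->|Hn0].
  rewrite /Sh /= ?Rpower_1_base.
  have -> : 1 / (1 - s) = 1 + s / (1 - s) by field; lra.
  have : 0 <= s / (1 - s). apply: Rmult_le_pos. lra. apply: Rlt_le. apply: Rinv_0_lt_compat. lra.
  lra.
have IH' := IH ltac:(lia).
change (Sh n.+1) with (Sh n + Rpower (INR (n + 1)) (-s)).
have Hn1 : 1 <= INR n by apply: (le_INR 1); lia.
have E1 : INR (n + 1) = INR n + 1 by rewrite plus_INR.
have E2 : INR n.+1 = INR n + 1 by rewrite S_INR.
rewrite E1 E2. have := mvt_step Hn1.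
move=> H. apply: (Rmult_le_reg_r (1 - s)). lra.
have -> : Rpower (INR n + 1) (1 - s) / (1 - s) * (1 - s) = Rpower (INR n + 1) (1 - s) by field; lra.
have : Sh n * (1 - s) <= Rpower (INR n) (1 - s).
  have := Rmult_le_compat_r (1 - s) _ _ ltac:(lra) IH'.
  have -> : Rpower (INR n) (1 - s) / (1 - s) * (1 - s) = Rpower (INR n) (1 - s) by field; lra.
  done.
lra.
Qed.

End Sbound.

Lemma pe_neg (d : nat) (J : pt d -> pt d -> R) (u : config d) p :
  pair_energy J (fun x => negb (u x)) p = pair_energy J u p.
Proof. rewrite /pair_energy. case: (u p.1); case: (u p.2) => /=; ring. Qed.

Lemma min_neg (d : nat) (J : pt d -> pt d -> R) G (u : config d) :
  minimizer J G u -> minimizer J G (fun x => negb (u x)).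
Proof.
move=> Hm v Hv. have Hv' : forall i, ~ G i -> (fun x => negb (v x)) i = u i.
  move=> i Hi /=. rewrite Hv //. by case: (u i).
have H := Hm _ Hv'. move=> L HL HLa eps Heps.
have [L' [H1 [H2 H3]]] := @H L HL HLa eps Heps.
exists L'. split => //. split => //.
have E1 : partial_H J (fun x => negb (u x)) L = partial_H J u L.
  rewrite /partial_H. apply: sum_ext => p _. by rewrite pe_neg.
have E2 : partial_H J (fun x => negb (v x)) L' = partial_H J v L'.
  rewrite /partial_H. apply: sum_ext => p _. by rewrite pe_neg.
rewrite E1. by rewrite -E2.
Qed.
Section Dens.
Variables (d : nat) (s lam Lam : R) (J : pt d -> pt d -> R).
Hypothesis Hd : (1 <= d)%coq_nat.
Hypothesis Hs : 0 < s < 1.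
Hypothesis Hlam : 0 < lam.
Hypothesis HLam : 0 <= Lam.
Hypothesis HJ0 : forall i j, 0 <= J i j.
Hypothesis HJ1 : J1 J.
Hypothesis HJ2 : J2 J.
Hypothesis HJP : JP J s lam Lam.
Variables (G : pt d -> Prop) (Gl : list (pt d)) (u : config d).
Hypothesis HGl : NoDup Gl.
Hypothesis HG : forall x, G x <-> In x Gl.
Hypothesis Hmin : minimizer J G u.
Variables (p : pt d) (M : nat).
Hypothesis HM : forall i, (linf (psub i p) <= Z.of_nat M)%Z -> G i.
Hypothesis Hup : u p = true.

Definition Gbig := filter (fun i => u i) (cube_enum p M).
Definition Fr (r : nat) := filter (fun i => bP (linf (psub i p) <= Z.of_nat r)%Z) Gbig.
Definition V (r : nat) := length (Fr r).
Definition w (r : nat) (i : pt d) := Z.to_nat (Z.of_nat r.+1 - linf (psub i p)).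
Definition theta := 1 - s / INR d.

Lemma Fr_In r i : (r <= M)%coq_nat -> In i (Fr r) <-> (linf (psub i p) <= Z.of_nat r)%Z /\ u i = true.
Proof.
move=> HrM. rewrite /Fr /Gbig. split.
  move=> /filter_In [/filter_In [_ Hu] /bP_true Hl]. by [].
move=> [Hl Hu]. apply/filter_In. split; last by apply: bP_T.
apply/filter_In. split => //. apply/In_cube_enum. rewrite /cube. lia.
Qed.

Lemma Fr_NoDup r : NoDup (Fr r).
Proof. apply: NoDup_filter. apply: NoDup_filter. apply: NoDup_cube_enum. Qed.

Lemma linf_self (x : pt d) : linf (psub x x) = 0%Z.
Proof. apply: Z.le_antisymm. apply: linf_le => // k. rewrite /psub. lia. apply: linf_nonneg. Qed.

Lemma p_in_Fr r : (r <= M)%coq_nat -> In p (Fr r).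
Proof. move=> HrM. apply/Fr_In => //. rewrite linf_self. lia. Qed.

Lemma V_pos r : (r <= M)%coq_nat -> (1 <= V r)%coq_nat.
Proof. move=> HrM. have := p_in_Fr HrM. rewrite /V. case: (Fr r) => //= a l _. lia. Qed.

Lemma V_mono r r' : (r <= r')%coq_nat -> (r' <= M)%coq_nat -> (V r <= V r')%coq_nat.
Proof.
move=> H1 H2. apply: NoDup_incl_length. apply: Fr_NoDup.
move=> i Hi. have H3 : (r <= M)%coq_nat by lia. have [Hl Hu] := proj1 (@Fr_In r i H3) Hi.
apply/(@Fr_In r' i H2). split => //. lia.
Qed.

Lemma step r : (r <= M)%coq_nat ->
  lam * ciso d s * Rpower (INR (V r)) theta <=
  3 * (Lam * Ct d s) * list_sumR (map (fun i => Rpower (INR (w r i)) (-s)) (Fr r)).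
Proof.
move=> HrM. set F := Fr r. have HF : NoDup F := Fr_NoDup r.
have HN := V_pos HrM.
have [R HR] := iso Hd Hs HN HF.
set Lj := fun i => filter (notinF F) (cube_enum i R).
set P0 := pairs F Lj.
have HP0 : NoDup P0 := NoDup_pairs Lj HF (fun i => NoDup_filter _ (NoDup_cube_enum i R)).
have Hsum : lam * list_sumR (map (fun i => list_sumR (map (fun j => Kd d s (l1 (psub i j))) (Lj i))) F)
            <= list_sumR (map (fun q => J (fst q) (snd q)) P0).
  rewrite /P0 sum_pairs -sum_scal. apply: sum_le => i Hi. rewrite -sum_scal. apply: sum_le => j Hj /=.
  have Hij : i <> j. move=> E. subst j. move: Hj => /filter_In [_]. rewrite /notinF. move/negbTE/bP_false. by [].
  by case: (J_K HJP Hij).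
pose B := list_sumR (map (fun i => Lam * (Ct d s * Rpower (INR (w r i)) (-s))) F).
have HQ : forall Q, NoDup Q -> (forall q, In q Q -> In (fst q) F /\ ~ In (snd q) F /\ u (snd q) = true) ->
     list_sumR (map (fun q => J (fst q) (snd q)) Q) <= B.
  move=> Q HQ HQF. rewrite (@group_sum _ _ F Q (fun q => J (fst q) (snd q)) HF (fun q Hq => proj1 (HQF q Hq))).
  apply: sum_le => i Hi /=. have [Hil Hiu] := proj1 (@Fr_In r i HrM) Hi.
  have Hw : Z.of_nat (w r i) = (Z.of_nat r.+1 - linf (psub i p))%Z.
    rewrite /w Z2Nat.id //. lia.
  apply: (row_tail (proj1 Hs) HJP HLam) => //.
  - lia.
  - by apply: NoDup_snd_filter.
  - move=> j Hj0. have := HQF _ (@In_snd_filter _ _ Q i j Hj0). move=> /= [_ [Hj Hju]].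
    have Hjp : (Z.of_nat r < linf (psub j p))%Z.
      case: (Z_lt_le_dec (Z.of_nat r) (linf (psub j p))) => // Hc. exfalso. apply: Hj. apply/(@Fr_In r j HrM). split => //.
    have := linf_tri j i p. rewrite Hw. lia.
have H1 : list_sumR (map (fun q => J (fst q) (snd q)) (filter (fun q => u (snd q)) P0)) <= B.
  apply: HQ. by apply: NoDup_filter.
  move=> q /filter_In [/In_pairs [Hq1 /filter_In [_ Hq2]] Hq3]. split => //. split => //.
  move: Hq2. rewrite /notinF. by move/negbTE/bP_false.
have H2 : list_sumR (map (fun q => J (fst q) (snd q)) (filter (fun q => ~~ u (snd q)) P0)) <= 2 * B.
  apply: (min_flip (proj1 Hs) HJ0 HJ1 HJ2 HJP HLam HGl HG Hmin HF) => //.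
  - move=> i Hi. have [Hil Hiu] := proj1 (@Fr_In r i HrM) Hi. split => //. apply: HM. lia.
  - by apply: NoDup_filter.
  - move=> q /filter_In [/In_pairs [Hq1 /filter_In [_ Hq2]] Hq3]. split => //. split.
    move: Hq2. rewrite /notinF. by move/negbTE/bP_false.
    by apply/negbTE.
have H3 := sum_filter (fun q => J (fst q) (snd q)) (fun q => u (snd q)) P0.
have HB : B = Lam * Ct d s * list_sumR (map (fun i => Rpower (INR (w r i)) (-s)) F).
  rewrite /B -sum_scal. apply: sum_ext => i _. ring.
have Hiso : lam * (ciso d s * Rpower (INR (length F)) (1 - s / INR d)) <=
   lam * list_sumR (map (fun i => list_sumR (map (fun j => Kd d s (l1 (psub i j))) (Lj i))) F).
  apply: Rmult_le_compat_l. lra. exact: HR.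
rewrite /V /theta -/F. lra.
Qed.

Lemma rsum_ext f g n : (forall k, f k = g k) -> rsum f n = rsum g n.
Proof. move=> H. elim: n => [|n IH] //=. by rewrite IH H. Qed.

Lemma rsum_scal f n c : rsum (fun k => c * f k) n = c * rsum f n.
Proof. elim: n => [|n IH] /=. ring. rewrite IH. ring. Qed.

Lemma rsum_zero f n : (forall k, (k < n)%coq_nat -> f k = 0) -> rsum f n = 0.
Proof. elim: n => [|n IH] H //=. rewrite IH. rewrite H. ring. lia. move=> k Hk. apply: H. lia. Qed.

Lemma sum_const (A : Type) (L : list A) c : list_sumR (map (fun _ => c) L) = INR (length L) * c.
Proof. apply: Rle_antisym. apply: sum_const_le => *; lra. apply: sum_const_ge => *; lra. Qed.

Lemma theta_pos : 0 < theta.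
Proof.
rewrite /theta. have Hd' : 1 <= INR d by apply: (le_INR 1).
have : s / INR d < 1. apply: (Rmult_lt_reg_r (INR d)). lra. field_simplify; lra.
lra.
Qed.

Lemma per_i (R0 : nat) (a : Z) : (0 <= a)%Z ->
  rsum (fun k => if bP (a <= Z.of_nat (R0 + k))%Z then Rpower (INR (Z.to_nat (Z.of_nat (R0 + k).+1 - a))) (-s) else 0) R0.+1
  <= if bP (a <= Z.of_nat (2 * R0))%Z then Sh s R0.+1 else 0.
Proof.
move=> Ha.
have Hh : forall k, 0 <= Rpower (INR (k + 1)) (-s). move=> k. apply: Rlt_le. apply: Rpower_pos.
case: (Z_le_gt_dec a (Z.of_nat R0)) => Har.
  rewrite bP_T; last lia. apply: rsum_le => k Hk. rewrite bP_T; last lia.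
  apply: Rpower_base_anti; last lra. split. apply: lt_0_INR. lia. apply: le_INR. lia.
case: (Z_le_gt_dec a (Z.of_nat (2 * R0))) => Ha2.
  rewrite (bP_T Ha2). set m := (Z.to_nat a - R0)%coq_nat.
  apply: Rle_trans; last apply: (@rsum_shift_le (fun k => Rpower (INR (k + 1)) (-s)) m R0.+1 Hh).
  apply: rsum_le => k Hk.
  case: (Nat.leb_spec m k) => Hmk.
    rewrite bP_T; last lia. have -> : Z.to_nat (Z.of_nat (R0 + k).+1 - a) = ((k - m)%coq_nat + 1)%coq_nat by lia. apply: Req_le. by rewrite plusE.
  rewrite bP_F; last lia. lra.
rewrite bP_F; last lia. rewrite rsum_zero. lra. move=> k Hk. rewrite bP_F //. lia.
Qed.

Lemma recur R0 : (2 * R0 <= M)%coq_nat ->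
  lam * ciso d s * INR R0.+1 * Rpower (INR (V R0)) theta <=
  3 * (Lam * Ct d s) * INR (V (2 * R0)) * Sh s R0.+1.
Proof.
move=> H2M. have Hth := theta_pos.
have Hc := @ciso_pos d s.
apply: (@Rle_trans _ (rsum (fun k => lam * ciso d s * Rpower (INR (V (R0 + k))) theta) R0.+1)).
  have := @rsum_const_ge (fun k => lam * ciso d s * Rpower (INR (V (R0 + k))) theta) R0.+1 (lam * ciso d s * Rpower (INR (V R0)) theta).
  have E : INR R0.+1 * (lam * ciso d s * Rpower (INR (V R0)) theta) = lam * ciso d s * INR R0.+1 * Rpower (INR (V R0)) theta by ring.
  rewrite E. apply. move=> k Hk. apply: Rmult_le_compat_l. have := Rmult_lt_0_compat _ _ Hlam Hc. lra.
  apply: Rpower_base_mono; last lra. split. apply: lt_0_INR. have := V_pos (r := R0). lia.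
  apply: le_INR. apply: V_mono; lia.
apply: Rle_trans. apply: rsum_le => k Hk. apply: step. lia.
rewrite rsum_scal.
rewrite (Rmult_assoc (3 * (Lam * Ct d s))). apply: Rmult_le_compat_l.
  have := Ct_pos d (proj1 Hs). nra.
have E : forall k, list_sumR (map (fun i => Rpower (INR (w (R0 + k) i)) (-s)) (Fr (R0 + k))) =
   list_sumR (map (fun i => if bP (linf (psub i p) <= Z.of_nat (R0 + k))%Z then Rpower (INR (w (R0 + k) i)) (-s) else 0) Gbig).
  move=> k. by rewrite /Fr -sum_if.
rewrite (@rsum_ext _ _ R0.+1 E) rsum_swap.
apply: Rle_trans. apply: sum_le => i Hi. apply: (per_i R0 (linf_nonneg (psub i p))).
rewrite sum_if sum_const. rewrite /V /Fr. lra.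
Qed.
Hypothesis HlL : lam <= Lam.

Definition kappa := lam * ciso d s * (1 - s) / (3 * (Lam * Ct d s)).
Definition c0 := Rmin 1 (Rpower (kappa / 2 ^ d) (INR d / s)).

Lemma kappa_pos : 0 < kappa.
Proof.
rewrite /kappa. have := @ciso_pos d s. have := Ct_pos d (proj1 Hs). move=> H1 H2.
apply: Rdiv_lt_0_compat. have : 0 < lam * ciso d s by nra. nra. nra.
Qed.

Lemma c0_pos : 0 < c0.
Proof. rewrite /c0. apply: Rmin_glb_lt. lra. apply: Rpower_pos. Qed.

Lemma c0_le1 : c0 <= 1.
Proof. rewrite /c0. apply: Rmin_l. Qed.

Lemma c0_key : Rpower c0 (s / INR d) <= kappa / 2 ^ d.
Proof.
have Hd' : 0 < INR d by apply: lt_0_INR; lia.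
have Hk : 0 < kappa / 2 ^ d. apply: Rdiv_lt_0_compat. apply: kappa_pos. apply: pow_lt; lra.
apply: Rle_trans. apply: (Rpower_base_mono (b := Rpower (kappa / 2 ^ d) (INR d / s))).
  split. apply: c0_pos. apply: Rmin_r.
  apply: Rlt_le. apply: Rdiv_lt_0_compat; lra.
rewrite Rpower_mult. have -> : INR d / s * (s / INR d) = 1 by field; lra.
rewrite Rpower_1 //. lra.
Qed.

Lemma recur2 R0 : (2 * R0 <= M)%coq_nat ->
  kappa * Rpower (INR R0.+1) s * Rpower (INR (V R0)) theta <= INR (V (2 * R0)).
Proof.
move=> H2M. have H := recur R0 H2M. have HS := @Sh_bound s Hs R0.+1 ltac:(lia).
have HR : 0 < INR R0.+1 by apply: lt_0_INR; lia.
have HCt := Ct_pos d (proj1 Hs).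
have HLp : 0 < Lam by lra.
have HV : 0 <= INR (V (2 * R0)) by apply: pos_INR.
have E : INR R0.+1 = Rpower (INR R0.+1) (1 - s) * Rpower (INR R0.+1) s.
  rewrite -Rpower_plus. have -> : 1 - s + s = 1 by ring. by rewrite Rpower_1.
have H2 : lam * ciso d s * INR R0.+1 * Rpower (INR (V R0)) theta <=
     3 * (Lam * Ct d s) * INR (V (2 * R0)) * (Rpower (INR R0.+1) (1 - s) / (1 - s)).
  apply: Rle_trans. exact: H. apply: Rmult_le_compat_l. have := Rmult_le_pos _ _ (Rlt_le _ _ HLp) (Rlt_le _ _ HCt). nra.
  exact: HS.
rewrite {1}E in H2. rewrite /kappa.
have HP1 := Rpower_pos (INR R0.+1) (1 - s).
set X := Rpower (INR R0.+1) (1 - s) in H2 HP1 *.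
set Y := Rpower (INR R0.+1) s in H2 *.
set Z := Rpower (INR (V R0)) theta in H2 *.
set W := INR (V (2 * R0)) in H2 HV *.
set C := Lam * Ct d s in H2 *.
have HC : 0 < C by rewrite /C; nra.
apply: (Rmult_le_reg_r (3 * C * X / (1 - s))).
  apply: Rdiv_lt_0_compat. nra. lra.
have -> : lam * ciso d s * (1 - s) / (3 * C) * Y * Z * (3 * C * X / (1 - s)) = lam * ciso d s * (X * Y) * Z.
  field. split; lra.
have -> : W * (3 * C * X / (1 - s)) = 3 * C * W * (X / (1 - s)) by field; lra.
exact: H2.
Qed.

Lemma half_split R : exists R', (2 * R' <= R)%coq_nat /\ (R <= 2 * R' + 1)%coq_nat.
Proof.
elim: R => [|R [R' [H1 H2]]]. by exists 0%nat; lia.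
case: (Nat.eq_dec R (2 * R' + 1)%coq_nat) => H.
  exists R'.+1. lia. exists R'. lia.
Qed.

Lemma density R : (R <= M)%coq_nat -> c0 * Rpower (INR R.+1) (INR d) <= INR (V R).
Proof.
have Hd' : 0 < INR d by apply: lt_0_INR; lia.
have Hth := theta_pos. have Hc0 := c0_pos. have Hk := kappa_pos.
elim/lt_wf_ind: R => R IH HRM.
case: (Nat.eq_dec R 0) => [->|HR0].
  have := V_pos (r := 0) ltac:(lia). move=> HV. have := le_INR _ _ HV.
  have -> : INR 1 = 1 by []. rewrite Rpower_1_base. have := c0_le1. lra.
have [R' [H1 H2]] := half_split R.
have HR' : (R' < R)%coq_nat by lia.
have IH' := IH R' HR' ltac:(lia).
have Hrec := recur2 R' ltac:(lia).
have Hmono : INR (V (2 * R')) <= INR (V R). apply: le_INR. apply: V_mono; lia.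
have HR1 : 0 < INR R'.+1 by apply: lt_0_INR; lia.
have HVR' : 0 < INR (V R'). apply: lt_0_INR. have := V_pos (r := R') ltac:(lia). lia.
have H3 : Rpower (c0 * Rpower (INR R'.+1) (INR d)) theta <= Rpower (INR (V R')) theta.
  apply: Rpower_base_mono; last lra. split. have := Rpower_pos (INR R'.+1) (INR d). nra. exact: IH'.
rewrite -Rpower_mult_distr in H3; [|lra|apply: Rpower_pos].
rewrite Rpower_mult in H3.
have H4 : kappa * Rpower (INR R'.+1) s * (Rpower c0 theta * Rpower (INR R'.+1) (INR d * theta))
          <= INR (V R).
  apply: Rle_trans; last apply: Hmono. apply: Rle_trans; last apply: Hrec.
  apply: Rmult_le_compat_l. have := Rpower_pos (INR R'.+1) s. nra. exact: H3.
have E1 : Rpower (INR R'.+1) s * Rpower (INR R'.+1) (INR d * theta) = Rpower (INR R'.+1) (INR d).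
  rewrite -Rpower_plus. f_equal. rewrite /theta. field. lra.
have H5 : kappa * Rpower c0 theta * Rpower (INR R'.+1) (INR d) <= INR (V R).
  rewrite -E1. have -> : kappa * Rpower c0 theta * (Rpower (INR R'.+1) s * Rpower (INR R'.+1) (INR d * theta)) =
     kappa * Rpower (INR R'.+1) s * (Rpower c0 theta * Rpower (INR R'.+1) (INR d * theta)) by ring.
  exact: H4.
have H6 : Rpower (INR R.+1) (INR d) <= 2 ^ d * Rpower (INR R'.+1) (INR d).
  rewrite !Rpower_pow; try (apply: lt_0_INR; lia). rewrite -Rpow_mult_distr.
  apply: pow_incr. split. apply: pos_INR. rewrite !S_INR. have := le_INR _ _ H2. rewrite plus_INR mult_INR /=. lra.
have H7 : c0 = Rpower c0 (s / INR d) * Rpower c0 theta.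
  rewrite -Rpower_plus /theta. have -> : s / INR d + (1 - s / INR d) = 1 by ring. by rewrite Rpower_1.
have Hkey := c0_key.
have Hp2 : 0 < 2 ^ d by apply: pow_lt; lra.
have HPc := Rpower_pos c0 theta. have HPR := Rpower_pos (INR R'.+1) (INR d).
have HPs := Rpower_pos c0 (s / INR d).
rewrite H7.
apply: Rle_trans; last apply: H5.
apply: (@Rle_trans _ (Rpower c0 (s / INR d) * Rpower c0 theta * (2 ^ d * Rpower (INR R'.+1) (INR d)))).
  apply: Rmult_le_compat_l. nra. exact: H6.
have : Rpower c0 (s / INR d) * 2 ^ d <= kappa.
  have := Rmult_le_compat_r (2 ^ d) _ _ (Rlt_le _ _ Hp2) Hkey.
  have -> : kappa / 2 ^ d * 2 ^ d = kappa by field; lra. done.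
move=> H8.
have := Rmult_le_compat_r (Rpower c0 theta * Rpower (INR R'.+1) (INR d)) _ _ ltac:(nra) H8.
lra.
Qed.

End Dens.

Theorem mainTheorem13 :
  forall (d : nat), (2 <= d)%coq_nat ->
  forall s lam Lam : R, (0 < s < 1)%R -> (0 < lam)%R -> (lam <= Lam)%R ->
  exists cstar : R, (0 < cstar)%R /\
    forall J : pt d -> pt d -> R,
      (forall i j, (0 <= J i j)%R) ->
      J1 J -> J2 J -> J5 J -> JP J s lam Lam ->
      forall (u : config d) (q : pt d) (l : nat), (1 <= l)%coq_nat ->
        minimizer J (cube q l) u ->
        in_boundary u q ->
        (Isum J u (cube_enum q l) (cube_enum q l)
           >= cstar * Rpower (INR l) (INR d - s))%R.
Proof.
move=> d Hd2 s lam Lam Hs Hlam HlL.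
have Hd : (1 <= d)%coq_nat by lia.
have HLam : 0 <= Lam by lra.
have Hd' : 0 < INR d by apply: lt_0_INR; lia.
set c := c0 d s lam Lam.
have Hc : 0 < c by apply: c0_pos.
set m := Rpower (2 * INR d) (-(INR d + s)).
have Hm : 0 < m by apply: Rpower_pos.
exists (2 * lam * c ^ 2 * m). split. have := pow_lt c 2 Hc. move=> Hc2. have := Rmult_lt_0_compat _ _ Hlam Hc2. move=> H3. have := Rmult_lt_0_compat _ _ H3 Hm. lra.
move=> J HJ0 HJ1 HJ2 HJ5 HJP u q l Hl Hmin [Huq [j [Hqj Huj]]].
set Gl := cube_enum q l.
have HGl : NoDup Gl := NoDup_cube_enum q l.
have HG : forall x, cube q l x <-> In x Gl by move=> x; rewrite In_cube_enum.
have Hplus := @density d s lam Lam J Hd Hs Hlam HLam HJ0 HJ1 HJ2 HJP (cube q l) Gl u HGl HG Hmin q l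
   (fun i Hi => Hi) Huq HlL l (le_n l).
set Ap := filter (fun i => u i) Gl.
have HAp : (V u q l l <= length Ap)%coq_nat.
  rewrite /V /Fr /Gbig. apply: filter_length_le.
have Hjq : (linf (psub j q) <= 1)%Z.
  have := linf_le_l1 (psub j q). rewrite l1_sym Hqj. lia.
have Hmin' := min_neg Hmin.
have HMm : forall i, (linf (psub i j) <= Z.of_nat (l - 1))%Z -> cube q l i.
  move=> i Hi. rewrite /cube. have := linf_tri i j q. lia.
have Hminus := @density d s lam Lam J Hd Hs Hlam HLam HJ0 HJ1 HJ2 HJP (cube q l) Gl _ HGl HG Hmin' j (l - 1)
   HMm ltac:(by rewrite /= Huj) HlL (l - 1) (le_n _).
set Am := filter (fun i => negb (u i)) Gl.
have HAm : (V (fun x => negb (u x)) j (l - 1) (l - 1) <= length Am)%coq_nat.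
  apply: NoDup_incl_length. apply: Fr_NoDup.
  move=> i /filter_In [/filter_In [Hi1 Hi2] _]. apply/filter_In. split => //.
  apply/HG. apply: HMm. by move/In_cube_enum: Hi1.
have El : (l - 1).+1 = l by lia. rewrite El in Hminus.
have Hpair : forall i k, In i Ap -> In k Am -> 2 * lam * (m * Rpower (INR l) (-(INR d + s))) <= pair_energy J u (i, k).
  move=> i k /filter_In [Hi Hui] /filter_In [Hk Huk].
  have Hik : i <> k. move=> E; subst k. by rewrite Hui in Huk.
  have Hlin : (linf (psub i k) <= Z.of_nat (2 * l))%Z.
    have := linf_tri i q k. move/HG: Hi. move/HG: Hk. rewrite /cube linf_sym. move=> H1 H2.
    lia.
  rewrite /pair_energy /= Hui. move/negbTE: Huk => ->. simpl.
  have [HJl _] := J_K HJP Hik.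
  have HK : Rpower (2 * INR d) (- (INR d + s)) * Rpower (INR l) (- (INR d + s)) <= Kd d s (l1 (psub i k)).
    rewrite Rpower_mult_distr; [|lra|apply: lt_0_INR; lia].
    rewrite /Kd. apply: Rpower_base_anti; last lra. split. apply: (IZR_lt 0). have := l1_pos Hik. lia.
    have := l1_le_linf (psub i k). move=> H3.
    rewrite !INR_IZR_INZ -!mult_IZR. apply: IZR_le. nia.
  have := Rmult_le_compat_l lam _ _ (Rlt_le _ _ Hlam) HK. rewrite /m. lra.
set mm := 2 * lam * (m * Rpower (INR l) (-(INR d + s))) in Hpair.
have Hmm : 0 < mm. rewrite /mm. have := Rpower_pos (INR l) (-(INR d + s)). move=> H0. have := Rmult_lt_0_compat _ _ Hm H0. move=> H1. have := Rmult_lt_0_compat _ _ Hlam H1. lra.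
have Hpe : forall x, 0 <= pair_energy J u x. move=> x. by case: (@pe_bounds d J HJ0 u x).
have Hinner : forall i, 0 <= list_sumR (map (fun k => pair_energy J u (i, k)) Gl).
  move=> i. apply: sum_nonneg => k _. apply: Hpe.
have S1 : list_sumR (map (fun i => list_sumR (map (fun k => pair_energy J u (i, k)) Gl)) Ap) <=
          Isum J u Gl Gl.
  rewrite /Isum. apply: sum_filter_le => i _. apply: Hinner.
have S2 : INR (length Ap) * (INR (length Am) * mm) <=
          list_sumR (map (fun i => list_sumR (map (fun k => pair_energy J u (i, k)) Gl)) Ap).
  apply: sum_const_ge => i Hi. apply: Rle_trans; last first.
    apply: (@sum_filter_le _ (fun k => pair_energy J u (i, k)) (fun k => negb (u k)) Gl) => k _. apply: Hpe.
  apply: sum_const_ge => k Hk. by apply: Hpair.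
have HlR : 0 < INR l by apply: lt_0_INR; lia.
have Hld : Rpower (INR l) (INR d) <= Rpower (INR l.+1) (INR d).
  apply: Rpower_base_mono; last lra. split => //. rewrite S_INR. lra.
have HP : c * Rpower (INR l) (INR d) <= INR (length Ap).
  apply: Rle_trans; last by apply: le_INR; exact: HAp.
  apply: Rle_trans; last exact: Hplus. apply: Rmult_le_compat_l; lra.
have HM' : c * Rpower (INR l) (INR d) <= INR (length Am).
  apply: Rle_trans; last by apply: le_INR; exact: HAm. exact: Hminus.
have HPl := Rpower_pos (INR l) (INR d).
have Hfin : 2 * lam * c ^ 2 * m * Rpower (INR l) (INR d - s) =
    (c * Rpower (INR l) (INR d)) * ((c * Rpower (INR l) (INR d)) * mm).
  rewrite /mm. have -> : Rpower (INR l) (INR d - s) = Rpower (INR l) (INR d) * Rpower (INR l) (INR d) * Rpower (INR l) (-(INR d + s)).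
    rewrite -!Rpower_plus. f_equal. ring.
  ring.
apply: Rle_ge. rewrite Hfin.
apply: Rle_trans; last exact: S1. apply: Rle_trans; last exact: S2.
apply: Rmult_le_compat. have := Rmult_lt_0_compat _ _ Hc HPl. lra.
  have := Rmult_lt_0_compat _ _ Hc HPl. nra.
  exact: HP.
apply: Rmult_le_compat_r. lra. exact: HM'.
Qed.
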